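(* Let $G=(V(G),E(G),\ell)$ be an $n$-order node-labeled graph, $k\ge 2$, and let $\mathbf{F}\in\mathbb{R}^{n\times d}$ be a node feature matrix consistent with $\ell$. Then for all $t\ge 1$ there exist functions $g^{(0)},\dots,g^{(t)}\colon V(G)^k\to\mathbb{R}$, with $g^{(0)}$ consistent with the initial colors, scalars $\alpha_1,\dots,\alpha_k,\beta_1,\dots,\beta_k$ and feed-forward networks $\mathsf{FFN}$ with $$g^{(s)}(\mathbf{u})=\mathsf{FFN}\Big(g^{(s-1)}(\mathbf{u})+\sum_{j\in[k]}\Big(\alpha_j\sum_{w\in\Delta_j(\mathbf{u})}g^{(s-1)}(\phi_j(\mathbf{u},w))+\beta_j\sum_{w\in V(G)\setminus\Delta_j(\mathbf{u})}g^{(s-1)}(\phi_j(\mathbf{u},w))\Big)\Big)$$ for $1\le s\le t$, such that for all $\mathbf{u},\mathbf{v}\in V(G)^k$, $$C^{k,\mathrm{M}}_t(\mathbf{u})=C^{k,\mathrm{M}}_t(\mathbf{v})\iff g^{(t)}(\mathbf{u})=g^{(t)}(\mathbf{v}).$$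
   Context: $\phi_j(\mathbf{u},w)$ replaces the $j$-th entry of $\mathbf{u}=(u_1,\dots,u_k)$ by $w$; $\Delta_j(\mathbf{u})=N(u_j)$ is the set of nodes adjacent to $u_j$. $C^{k,\mathrm{M}}_t$ is the coloring of the $\delta$-$k$-WL: initial colors are determined by the atomic type of the tuple and the node labels, and $C^{k,\mathrm{M}}_t(\mathbf{v})=\mathsf{RELABEL}\big(C^{k,\mathrm{M}}_{t-1}(\mathbf{v}),(\{\!\{(C^{k,\mathrm{M}}_{t-1}(\phi_j(\mathbf{v},w)),\mathrm{adj}(v_j,w))\mid w\in V(G)\}\!\})_{j=1}^k\big)$, with $\mathrm{adj}(v,w)=1$ if $(v,w)\in E(G)$ and $0$ otherwise, and $\mathsf{RELABEL}$ injective into fresh natural numbers. ''$g^{(0)}$ consistent with the initial colors'' means $g^{(0)}(\mathbf{u})=g^{(0)}(\mathbf{v})$ iff $\mathbf{u},\mathbf{v}$ have the same initial color. *)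

(* Defs.v *)
From HB Require Import structures.
From mathcomp Require Import all_boot all_order all_algebra.
From mathcomp Require Import reals.
Set Implicit Arguments. Unset Strict Implicit. Unset Printing Implicit Defensive.
Import Order.TTheory GRing.Theory Num.Theory.

Definition simple_graph (V : finType) (e : rel V) : Prop :=
  symmetric e /\ irreflexive e.

Definition ktuple (V : finType) (k : nat) := {ffun 'I_k -> V}.

Definition phi (V : finType) (k : nat) (u : ktuple V k) (j : 'I_k) (w : V)
  : ktuple V k := [ffun i => if i == j then w else u i].

(* Initial color: atomic type (equalities and adjacencies between entries)
   together with the node labels; injectively encoded into nat by pickle. *)
Definition init_color (V : finType) (L : countType) (e : rel V) (l : V -> L)
  (k : nat) (u : ktuple V k) : nat :=
  pickle ([ffun ij : 'I_k * 'I_k => (u ij.1 == u ij.2, e (u ij.1) (u ij.2))],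
          [ffun i : 'I_k => l (u i)]).

(* Multiset {{ (C(phi_j(u,w)), adj(u_j,w)) | w in V }}, represented canonically
   as a sorted list of the (injective) codes of its elements. *)
Definition nbr_multiset (V : finType) (e : rel V) (k : nat)
  (C : ktuple V k -> nat) (u : ktuple V k) (j : 'I_k) : seq nat :=
  sort leq [seq pickle (C (phi u j w), e (u j) w) | w <- enum V].

(* C^{k,M}_t ; RELABEL is the injective map pickle *)
Fixpoint deltaWL (V : finType) (L : countType) (e : rel V) (l : V -> L)
  (k : nat) (t : nat) : ktuple V k -> nat :=
  match t with
  | 0 => @init_color V L e l k
  | t'.+1 => fun u =>
      let C := @deltaWL V L e l k t' in
      pickle (C u, [seq nbr_multiset e C u j | j <- enum 'I_k])
  end.

Inductive ffn (R : realType) : nat -> nat -> Type :=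
| ffn_out (a b : nat) (W : 'M[R]_(a, b)) (c : 'rV[R]_b) : ffn R a b
| ffn_layer (a b c : nat) (W : 'M[R]_(a, b)) (bias : 'rV[R]_b)
    (rest : ffn R b c) : ffn R a c.

Definition relu (R : realType) (x : R) : R := Num.max x 0%R.

Fixpoint ffn_eval (R : realType) (a b : nat) (N : ffn R a b) : 'rV[R]_a -> 'rV[R]_b :=
  match N with
  | ffn_out _ _ W c => fun x => (x *m W + c)%R
  | ffn_layer _ _ _ W bias rest =>
      fun x => ffn_eval rest (map_mx (@relu R) (x *m W + bias)%R)
  end.

Definition FFN (R : realType) (N : ffn R 1 1) (x : R) : R :=
  ffn_eval N (const_mx x) ord0 ord0.

Arguments deltaWL {V L} e l k t _.

(* Main.v *)
Require Import Defs.
From HB Require Import structures.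
From mathcomp Require Import all_boot all_order all_algebra zify.
From Stdlib Require Import ClassicalEpsilon.
From mathcomp Require Import reals.
Import Order.TTheory GRing.Theory Num.Theory.

Lemma sum_pow_split (B : nat) (s : seq nat) :
  \sum_(x <- s) B ^ x =
  count_mem 0%N s + B * \sum_(x <- [seq y.-1 | y <- s & (0 < y)%N]) B ^ x.
Proof.
elim: s => [|x s IH]; first by rewrite !big_nil muln0.
rewrite big_cons IH /=; case: x => [|x] /=.
  by rewrite expn0 addnA.
by rewrite big_cons mulnDr expnS addnCA.
Qed.

Lemma count_pred_filter (s : seq nat) (y : nat) :
  count_mem y.+1 s = count_mem y [seq x.-1 | x <- s & (0 < x)%N].
Proof.
elim: s => [|x s IH] //=; case: x => [|x] //=.
by rewrite IH eqSS.
Qed.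

Lemma digits_aux (B n : nat) (s1 s2 : seq nat) : (1 < B)%N ->
  all (fun x => x < n)%N s1 -> all (fun x => x < n)%N s2 ->
  (size s1 < B)%N -> (size s2 < B)%N ->
  \sum_(x <- s1) B ^ x = \sum_(x <- s2) B ^ x -> perm_eq s1 s2.
Proof.
move=> B1; elim: n s1 s2 => [|n IH] s1 s2.
  by case: s1 => [|? ?]; case: s2 => [|? ?].
move=> a1 a2 z1 z2; rewrite (sum_pow_split B s1) (sum_pow_split B s2) => E.
have c1 : (count_mem 0%N s1 < B)%N by apply: leq_ltn_trans (count_size _ _) z1.
have c2 : (count_mem 0%N s2 < B)%N by apply: leq_ltn_trans (count_size _ _) z2.
have Ec : count_mem 0%N s1 = count_mem 0%N s2.
  have := congr1 (modn^~ B) E.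
  by rewrite ![(count_mem 0 _ + _)%N]addnC ![(B * _)%N]mulnC !modnMDl !modn_small.
move: E; rewrite Ec => /addnI /eqP; rewrite eqn_mul2l.
have -> : (B == 0%N) = false by rewrite gtn_eqF // ltnW.
move=> /= /eqP E.
have P : perm_eq [seq y.-1 | y <- s1 & (0 < y)%N] [seq y.-1 | y <- s2 & (0 < y)%N].
  apply: IH => //.
  - apply/allP => x /mapP [y]; rewrite mem_filter => /andP [y0 ys] ->.
    by move/allP: a1 => /(_ y ys); case: y y0 {ys}.
  - apply/allP => x /mapP [y]; rewrite mem_filter => /andP [y0 ys] ->.
    by move/allP: a2 => /(_ y ys); case: y y0 {ys}.
  - by rewrite size_map size_filter; apply: leq_ltn_trans (count_size _ _) z1.
  - by rewrite size_map; rewrite size_filter; apply: leq_ltn_trans (count_size _ _) z2.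
apply/allP => x _ /=; apply/eqP; case: x => [|x] //.
by rewrite !count_pred_filter; apply/permP.
Qed.

Lemma digits (B : nat) (s1 s2 : seq nat) : (1 < B)%N ->
  (size s1 < B)%N -> (size s2 < B)%N ->
  \sum_(x <- s1) B ^ x = \sum_(x <- s2) B ^ x -> perm_eq s1 s2.
Proof.
move=> B1 z1 z2 E.
have [n Hn] : exists n, all (fun x => x < n)%N (s1 ++ s2).
  elim: (s1 ++ s2) => [|a s [n Hn]]; first by exists 0%N.
  exists (maxn n a.+1); rewrite /= leq_max ltnSn orbT /=.
  apply/allP => x /(allP Hn) xn; by rewrite leq_max xn.
rewrite all_cat in Hn; case/andP: Hn => h1 h2.
exact: (@digits_aux B n s1 s2 B1 h1 h2 z1 z2 E).
Qed.

Local Open Scope ring_scope.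
Definition lin (R : realType) (ps : seq (R * R)) (c0 x : R) : R :=
  c0 + \sum_(p <- ps) p.1 * relu (x - p.2).
Arguments lin {R}.

Lemma lin_ffn (R : realType) (ps : seq (R * R)) (c0 : R) :
  exists N : ffn R 1 1, forall x, FFN N x = lin ps c0 x.
Proof.
pose m := size ps.
pose W : 'M[R]_(1, m) := const_mx 1.
pose bias : 'rV[R]_m := \row_(i < m) - (nth (0, 0) ps i).2.
pose W2 : 'M[R]_(m, 1) := \col_(i < m) (nth (0, 0) ps i).1.
exists (ffn_layer W bias (ffn_out W2 (const_mx c0))) => x.
rewrite /FFN /= !mxE /lin addrC; congr (_ + _).
rewrite (big_nth (0, 0)) big_mkord; apply: eq_bigr => i _.
rewrite !mxE big_ord1 !mxE mulr1 mulrC; done.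
Qed.

Lemma max_exists (R : realType) (xs : seq R) : xs != [::] ->
  exists2 m, m \in xs & forall x, x \in xs -> x <= m.
Proof.
elim: xs => [|a s IH] // _.
case: s IH => [|b s] IH.
  by exists a => [|x]; rewrite ?mem_seq1 // => /eqP ->.
have [m ms mmax] := IH isT.
have [am|ma] := lerP a m.
  exists m; first by rewrite in_cons ms orbT.
  by move=> x; rewrite in_cons => /orP [/eqP ->|/mmax].
exists a; first by rewrite in_cons eqxx.
move=> x; rewrite in_cons => /orP [/eqP ->//|/mmax xm].
exact: le_trans xm (ltW ma).
Qed.

Lemma interp (R : realType) (xs : seq R) (f : R -> R) :
  exists ps c0, forall x, x \in xs -> lin ps c0 x = f x.
Proof.
move: {2}(size xs) (leqnn (size xs)) => n; elim: n xs => [|n IH] xs.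
  by case: xs => // _; exists [::], 0.
move=> sz.
have [->|xs0] := eqVneq xs [::]; first by exists [::], 0.
have [m mxs mmax] := @max_exists _ xs xs0.
pose xs' := [seq x <- xs | x != m].
have sz' : (size xs' <= n)%N.
  rewrite -ltnS; apply: leq_trans sz.
  rewrite size_filter -(count_predC (fun x => x != m) xs) -{1}[count _ _]addn0 ltn_add2l -has_count.
  by apply/hasP; exists m => //=; rewrite negbK.
have [ps [c0 Hps]] := IH xs' sz'.
have [xs'0|xs'n0] := eqVneq xs' [::].
  exists [::], (f m) => x xxs.
  have : x \notin xs' by rewrite xs'0.
  rewrite mem_filter xxs andbT negbK => /eqP ->.
  by rewrite /lin big_nil addr0.
have [m' m'xs m'max] := @max_exists _ xs' xs'n0.
have m'm : m' < m.
  move: m'xs; rewrite mem_filter => /andP [m'm /mmax].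
  by rewrite le_eqVlt (negPf m'm).
exists (((f m - lin ps c0 m) / (m - m'), m') :: ps), c0 => x xxs.
have -> : lin (((f m - lin ps c0 m) / (m - m'), m') :: ps) c0 x =
  lin ps c0 x + (f m - lin ps c0 m) / (m - m') * relu (x - m').
  by rewrite /lin big_cons /= -addrA [X in _ + X = _]addrC.
have [xm|xm] := eqVneq x m.
  rewrite xm /relu max_l; last by rewrite subr_ge0 ltW.
  rewrite mulfVK ?subrKC //.
  by rewrite subr_eq0 gt_eqF.
have xx' : x \in xs' by rewrite mem_filter xm.
rewrite Hps // /relu max_r ?mulr0 ?addr0 //.
by rewrite subr_le0 m'max.
Qed.
Lemma pos_inj (M j j' i i' : nat) (b b' : bool) : (i < M)%N -> (i' < M)%N ->
  ((2 * j + 1 + b) * M + i)%N = ((2 * j' + 1 + b') * M + i')%N ->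
  [/\ j = j', b = b' & i = i'].
Proof.
move=> iM i'M E.
have M0 : (0 < M)%N by apply: leq_ltn_trans iM.
have hd := congr1 (divn^~ M) E; have hm := congr1 (modn^~ M) E.
rewrite /= !divnMDl // !divn_small // !addn0 in hd.
rewrite /= !modnMDl !modn_small // in hm.
by clear E; case: b b' hd => [] [] /= hd; split => //; lia.
Qed.

Lemma sum_single (I : finType) (j : I) (F : I -> nat) :
  (forall j', j' != j -> F j' = 0%N) -> (\sum_(j' <- Finite.enum I) F j' = F j)%N.
Proof.
move=> H; rewrite -enumT big_enum (bigD1 j) //= big1 ?addn0 // => j' /andP [_]; exact: H.
Qed.

Local Open Scope ring_scope.

Theorem corollaryI4 (R : realType) (V : finType) (L : countType)
  (e : rel V) (l : V -> L) (k d : nat) (F : V -> 'rV[R]_d) :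
  simple_graph e ->
  (2 <= k)%N ->
  (forall x y : V, F x = F y <-> l x = l y) ->
  forall t : nat, (1 <= t)%N ->
  exists (g : nat -> ktuple V k -> R) (alpha beta : 'I_k -> R)
         (N : nat -> ffn R 1 1),
    (forall u v : ktuple V k,
        g 0%N u = g 0%N v <-> deltaWL e l k 0%N u = deltaWL e l k 0%N v) /\
    (forall s : nat, (1 <= s <= t)%N -> forall u : ktuple V k,
        g s u = FFN (N s)
          (g s.-1 u +
           \sum_(j < k)
             (alpha j * (\sum_(w | e (u j) w) g s.-1 (phi u j w)) +
              beta j * (\sum_(w | ~~ e (u j) w) g s.-1 (phi u j w))))) /\
    (forall u v : ktuple V k,
        deltaWL e l k t u = deltaWL e l k t v <-> g t u = g t v).
Proof.
move=> _ _ _ t _.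
pose M := #|{: ktuple V k}|.
pose cols s := undup [seq deltaWL e l k s u | u <- enum {: ktuple V k}].
pose idx s u := index (deltaWL e l k s u) (cols s).
pose B := (2 + k * #|V|)%N.
pose g s u := ((B ^ idx s u)%N)%:R : R.
pose alpha (j : 'I_k) := ((B ^ ((2 * j + 1 + true) * M))%N)%:R : R.
pose beta (j : 'I_k) := ((B ^ ((2 * j + 1 + false) * M))%N)%:R : R.
pose pos (j : nat) (b : bool) (i : nat) := ((2 * j + 1 + b) * M + i)%N.
pose exps s (u : ktuple V k) := idx s u :: flatten
  [seq [seq pos j (e (u j) w) (idx s (phi u j w)) | w <- enum V] | j : 'I_k <- enum 'I_k].
pose agg s (u : ktuple V k) := g s u + \sum_(j < k)
  (alpha j * (\sum_(w | e (u j) w) g s (phi u j w)) +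
   beta j * (\sum_(w | ~~ e (u j) w) g s (phi u j w))).
have B1 : (1 < B)%N by rewrite /B; lia.
have inC s u : deltaWL e l k s u \in cols s.
  by rewrite mem_undup; apply/mapP; exists u; rewrite ?mem_enum.
have idx_lt s u : (idx s u < M)%N.
  apply: (@leq_trans (size (cols s))); first by rewrite index_mem.
  by apply: leq_trans (size_undup _) _; rewrite size_map /M cardE.
have idx_inj s u v : idx s u = idx s v -> deltaWL e l k s u = deltaWL e l k s v.
  by move=> E; rewrite -(nth_index 0 (inC s u)) -(nth_index 0 (inC s v)) -/(idx s u) E.
have g_iff s u v : g s u = g s v <-> deltaWL e l k s u = deltaWL e l k s v.
  split; last by move=> E; rewrite /g /idx E.
  by move/eqP; rewrite /g eqr_nat eqn_exp2l // => /eqP /idx_inj.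
have size_exps s u : size (exps s u) = (1 + k * #|V|)%N.
  rewrite /exps /= size_flatten /shape -map_comp.
  rewrite (@eq_map _ _ _ (fun _ => #|V|)); last by move=> j /=; rewrite size_map -cardE.
  by rewrite sumnE big_map big_enum sum_nat_const card_ord.
have agg_nat s u : agg s u = ((\sum_(x <- exps s u) B ^ x)%N)%:R.
  rewrite /agg /exps big_cons big_flatten /= big_map natrD; apply: (f_equal2 +%R); first by [].
  rewrite big_enum /= natr_sum; apply: eq_bigr => j _.
  rewrite big_map big_enum /= natr_sum [RHS](bigID (fun w => e (u j) w)) /=.
  apply: (f_equal2 +%R); rewrite mulr_sumr; apply: eq_bigr => w ew.
    by rewrite /pos ew expnD natrM.
  by rewrite /pos (negbTE ew) expnD natrM.

have M_pos : forall (j : 'I_k) (b : bool) i x, (x < M)%N -> (pos j b i == x) = false.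
  move=> j b i x xM; apply: negbTE; rewrite neq_ltn; apply/orP; right.
  apply: leq_trans xM _; apply: leq_trans (leq_addr _ _); rewrite /pos.
  by apply: leq_pmull; lia.
have cnt_low s u x : (x < M)%N -> count_mem x (exps s u) = (idx s u == x).
  move=> xM; rewrite /exps /= count_flatten sumnE !big_map big1 ?addn0 // => j _.
  rewrite count_map (@eq_count _ _ pred0) ?count_pred0 // => w /=.
  exact: M_pos.
have cnt_high s u (j : 'I_k) (b : bool) i : (i < M)%N ->
    count_mem (pos j b i) (exps s u) =
    count (fun w => (e (u j) w == b) && (idx s (phi u j w) == i)) (enum V).
  move=> iM; rewrite /exps -cat1s count_cat count_flatten sumnE !big_map.
  have -> : count_mem (pos j b i) [:: idx s u] = 0%N by rewrite /= eq_sym M_pos.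
  rewrite add0n (@sum_single _ j).
    rewrite count_map; apply: eq_count => w /=.
    apply/eqP/andP => [/(@pos_inj M _ _ _ _ _ _ (idx_lt _ _) iM) [_ -> ->] //|[/eqP -> /eqP ->] //].
  move=> j' j'j; rewrite count_map (@eq_count _ _ pred0) ?count_pred0 // => w /=.
  apply: negbTE; apply/eqP => /(@pos_inj M _ _ _ _ _ _ (idx_lt _ _) iM) [E _ _].
  by move: j'j; rewrite -(inj_eq val_inj) /= E eqxx.
have step s u v : agg s u = agg s v -> deltaWL e l k s.+1 u = deltaWL e l k s.+1 v.
  rewrite !agg_nat => /eqP; rewrite eqr_nat => /eqP E.
  have P : perm_eq (exps s u) (exps s v).
    by apply: (@digits B _ _ B1 _ _ E); rewrite size_exps /B; lia.
  have Hc x : count_mem x (exps s u) = count_mem x (exps s v) by apply/permP.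
  have Ei : idx s u = idx s v.
    have := Hc (idx s u); rewrite !cnt_low // eqxx.
    by case: eqP.
  rewrite /=; congr pickle; congr pair; first exact: idx_inj.
  apply: eq_map => j; rewrite /nbr_multiset.
  apply/perm_sortP; [exact: leq_total|exact: leq_trans|exact: anti_leq|].
  pose dec (p : nat * bool) := (nth 0%N (cols s) p.1, p.2).
  have Hp (x : ktuple V k) (ws : seq V) :
    [seq pickle (deltaWL e l k s (phi x j w), e (x j) w) | w <- ws] =
    map pickle (map dec [seq (idx s (phi x j w), e (x j) w) | w <- ws]).
    by rewrite -!map_comp; apply: eq_map => w /=; rewrite /dec /= nth_index.
  rewrite !Hp; apply: perm_map; apply: perm_map.
  apply/allP => [[i b]] _ /=; apply/eqP; rewrite !count_map.
  have [iM|iM] := ltnP i M.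
    have := Hc (pos j b i); rewrite !cnt_high // enumT => H.
    rewrite (eq_count (a2 := fun w => (e (u j) w == b) && (idx s (phi u j w) == i))).
      rewrite H; apply: eq_count => w /=; by rewrite xpair_eqE andbC.
    by move=> w /=; rewrite xpair_eqE andbC.
  rewrite !(@eq_count _ _ pred0) ?count_pred0 // => w /=;
    rewrite xpair_eqE; apply: negbTE; rewrite negb_and; apply/orP; left;
    by rewrite neq_ltn (leq_trans (idx_lt _ _) iM).
have Nex s : exists N : ffn R 1 1, forall u, g s.+1 u = FFN N (agg s u).
  pose f r := if [pick u | agg s u == r] is Some u then g s.+1 u else 0.
  have [ps [c0 H]] := @interp R (map (agg s) (enum {: ktuple V k})) f.
  have [N HN] := @lin_ffn R ps c0.
  exists N => u; rewrite HN H ?map_f ?mem_enum // /f.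
  case: pickP => [u' /eqP Eu'|/(_ u)]; last by rewrite eqxx.
  by apply/g_iff; apply: step.
pose Nf s := proj1_sig (constructive_indefinite_description _ (Nex s)).
exists g, alpha, beta, (fun s => Nf s.-1); split; first exact: g_iff.
split; last by move=> u v; rewrite g_iff.
case=> // s _ u.
exact: (proj2_sig (constructive_indefinite_description _ (Nex s)) u).
Qed.
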